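(* Let $X\subset\mathbb R^n\setminus\{0\}$ be a finite set such that $0$ lies in the interior of $\operatorname{conv}X$, no element of $X$ is a positive multiple of another element of $X$, and every $n+1$ points of $X$ are in good position. Then there are $k\ge 1$ pairwise disjoint subsets $X_1,\dots,X_k\subseteq X$ such that (i) each $X_i$ is the vertex set of a simplex whose relative interior contains $0$, and (ii) the linear spaces $\operatorname{span}X_1,\dots,\operatorname{span}X_k$ are linearly independent and their direct sum is $\mathbb R^n$.
   Context: The positive hull $\operatorname{pos}A$ is the set of nonnegative linear combinations of elements of $A$. A finite set $A\subset\mathbb R^n$ is in conical position if there is a hyperplane strictly separating $A$ from $0$ (equivalently $0\notin\operatorname{conv}A$) and no point of $A$ lies in the positive hull of the other points of $A$; it is in good position if it is not in conical position. A collection $X_1,\dots,X_k$ as in the conclusion is called a skeleton of $X$. *)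

(* Defs.v *)
From HB Require Import structures.
From mathcomp Require Import all_boot all_order all_algebra.
From mathcomp Require Import finmap.
From mathcomp Require Import reals.
Set Implicit Arguments. Unset Strict Implicit. Unset Printing Implicit Defensive.
Import Order.TTheory GRing.Theory Num.Theory.
Local Open Scope ring_scope.
Local Open Scope fset_scope.

Section Defs.
Variables (R : realType) (n : nat).
Local Notation V := 'rV[R]_n.

Definition dotv (u v : V) : R := \sum_(i < n) u 0 i * v 0 i.

Definition in_span (A : {fset V}) (x : V) : Prop :=
  exists w : V -> R, x = \sum_(a <- A) w a *: a.

Definition in_pos (A : {fset V}) (x : V) : Prop :=
  exists w : V -> R, (forall a, a \in A -> 0 <= w a) /\ x = \sum_(a <- A) w a *: a.

Definition in_conv (A : {fset V}) (x : V) : Prop :=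
  exists w : V -> R, (forall a, a \in A -> 0 <= w a) /\
    \sum_(a <- A) w a = 1 /\ x = \sum_(a <- A) w a *: a.

Definition in_aff (A : {fset V}) (x : V) : Prop :=
  exists w : V -> R, \sum_(a <- A) w a = 1 /\ x = \sum_(a <- A) w a *: a.

Definition near_by (eps : R) (x y : V) : Prop := dotv (x - y) (x - y) < eps ^+ 2.

Definition in_interior_conv (A : {fset V}) (x : V) : Prop :=
  exists2 eps : R, 0 < eps & forall y : V, near_by eps y x -> in_conv A y.

Definition in_relint_conv (A : {fset V}) (x : V) : Prop :=
  in_conv A x /\
  exists2 eps : R, 0 < eps &
    forall y : V, in_aff A y -> near_by eps y x -> in_conv A y.

Definition aff_indep (A : {fset V}) : Prop :=
  forall w : V -> R, \sum_(a <- A) w a = 0 -> \sum_(a <- A) w a *: a = 0 ->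
    forall a, a \in A -> w a = 0.

Definition simplex_vertices (A : {fset V}) : Prop :=
  A != fset0 /\ aff_indep A.

Definition conical_position (A : {fset V}) : Prop :=
  (exists (c : V) (t : R), dotv c 0 < t /\ forall a, a \in A -> t < dotv c a) /\
  (forall a, a \in A -> ~ in_pos (A `\ a) a).

Definition good_position (A : {fset V}) : Prop := ~ conical_position A.

End Defs.

(* Main.v *)
Require Import Defs.
From HB Require Import structures.
From mathcomp Require Import all_boot all_order all_algebra.
From mathcomp Require Import finmap.
From mathcomp Require Import reals boolp.
From mathcomp Require Import lra zify.
Set Implicit Arguments. Unset Strict Implicit. Unset Printing Implicit Defensive.
Import Order.TTheory GRing.Theory Num.Theory.
Local Open Scope fset_scope.
Local Open Scope ring_scope.

Section Main.
Variables (R : realType) (n : nat).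
Local Notation V := 'rV[R]_n.
Implicit Types (A B C L Y S W T : {fset V}) (w : V -> R) (u v : V).

Definition sm (A : {fset V}) (w : V -> R) : V := \sum_(a <- A) w a *: a.
Definition rst (A : {fset V}) (w : V -> R) : V -> R := fun x => if x \in A then w x else 0.

Lemma sm_ext A w w' : (forall x, x \in A -> w x = w' x) -> sm A w = sm A w'.
Proof. by move=> H; apply: eq_fbigr => x xA _; rewrite H. Qed.

Lemma sm_incl A B w : A `<=` B -> (forall x, x \in B -> x \notin A -> w x = 0) -> sm A w = sm B w.
Proof. move=> AB H; apply: big_fset_incl => // x xB xA; by rewrite H // scale0r. Qed.

Lemma sm_rst A B w : A `<=` B -> sm B (rst A w) = sm A w.
Proof.
move=> AB; rewrite -(sm_incl (A:=A)) //; last by move=> x _ xA; rewrite /rst (negbTE xA).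
by apply: sm_ext => x xA; rewrite /rst xA.
Qed.

Lemma smD A w w' : sm A (fun x => w x + w' x) = sm A w + sm A w'.
Proof. by rewrite /sm -big_split /=; apply: eq_bigr => x _; rewrite scalerDl. Qed.

Lemma smZ A c w : sm A (fun x => c * w x) = c *: sm A w.
Proof. by rewrite /sm scaler_sumr; apply: eq_bigr => x _; rewrite scalerA. Qed.

Lemma smN A w : sm A (fun x => - w x) = - sm A w.
Proof. by rewrite /sm -sumrN; apply: eq_bigr => x _; rewrite scaleNr. Qed.

Lemma smB A w w' : sm A (fun x => w x - w' x) = sm A w - sm A w'.
Proof. by rewrite smD smN. Qed.

Lemma sm0f A : sm A (fun _ => 0) = 0.
Proof. by rewrite /sm big1 // => x _; rewrite scale0r. Qed.

Lemma sm_set0 w : sm fset0 w = 0.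
Proof. by rewrite /sm big_seq_fset0. Qed.

Lemma sm_set1 a w : sm [fset a] w = w a *: a.
Proof. by rewrite /sm big_seq_fset1. Qed.

Lemma smD1 A a w : a \in A -> sm A w = w a *: a + sm (A `\ a) w.
Proof. by move=> aA; rewrite /sm (big_fsetD1 a). Qed.

Lemma smU A B w : [disjoint A & B] -> sm (A `|` B) w = sm A w + sm B w.
Proof.
move=> /fdisjointP dAB.
have -> : sm (A `|` B) w = sm (A `|` B) (rst A w) + sm (A `|` B) (fun x => w x - rst A w x).
  by rewrite -smD; apply: sm_ext => x _; rewrite addrC subrK.
rewrite sm_rst ?fsubsetUl //; congr (_ + _).
rewrite -(sm_incl (A := B)) ?fsubsetUr //.
  apply: sm_ext => x xB; rewrite /rst; case: ifP => xA; last by rewrite subr0.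
  by have := dAB _ xA; rewrite xB.
by move=> x; rewrite in_fsetU => /orP[xA _|-> //]; rewrite /rst xA subrr.
Qed.

Lemma span0 A : in_span A 0.
Proof. by exists (fun _ => 0); rewrite -/(sm A _) sm0f. Qed.

Lemma spanD A u v : in_span A u -> in_span A v -> in_span A (u + v).
Proof. by move=> [w ->] [w' ->]; exists (fun x => w x + w' x); rewrite -!/(sm A _) smD. Qed.

Lemma spanZ A c u : in_span A u -> in_span A (c *: u).
Proof. by move=> [w ->]; exists (fun x => c * w x); rewrite -!/(sm A _) smZ. Qed.

Lemma spanN A u : in_span A u -> in_span A (- u).
Proof. by move=> H; rewrite -scaleN1r; apply: spanZ. Qed.

Lemma spanB A u v : in_span A u -> in_span A v -> in_span A (u - v).
Proof. by move=> Hu Hv; apply: spanD => //; apply: spanN. Qed.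

Lemma span_sm A w : in_span A (sm A w).
Proof. by exists w. Qed.

Lemma span_mem A a : a \in A -> in_span A a.
Proof.
move=> aA; exists (fun x => if x == a then 1 else 0); rewrite -/(sm A _) (smD1 _ aA) eqxx scale1r.
rewrite (_ : sm _ _ = 0) ?addr0 // -(sm0f (A `\ a)); apply: sm_ext => x.
by rewrite in_fsetD1 => /andP[/negbTE ->].
Qed.

Lemma span_sum_gen A B w : (forall a, a \in A -> in_span B a) -> in_span B (sm A w).
Proof.
move=> H; rewrite /sm big_seq; apply: (big_ind (in_span B)); first exact: span0.
  exact: spanD.
by move=> a aA; apply: spanZ; apply: H.
Qed.

Lemma span_trans A B v : (forall a, a \in A -> in_span B a) -> in_span A v -> in_span B v.
Proof. by move=> H [w ->]; apply: span_sum_gen. Qed.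

Lemma span_sub A B v : A `<=` B -> in_span A v -> in_span B v.
Proof. by move=> /fsubsetP AB; apply: span_trans => a /AB; apply: span_mem. Qed.

Lemma span_set0 v : in_span fset0 v -> v = 0.
Proof. by move=> [w ->]; rewrite -/(sm _ _) sm_set0. Qed.

Lemma spanU_dec A B v : in_span (A `|` B) v -> exists al, in_span A (v - sm B al).
Proof.
move=> [w ->]; exists (fun x => w x - rst A w x); rewrite -/(sm _ _).
have -> : sm (A `|` B) w = sm (A `|` B) (rst A w) + sm (A `|` B) (fun x => w x - rst A w x).
  by rewrite -smD; apply: sm_ext => x _; rewrite addrC subrK.
rewrite sm_rst ?fsubsetUl // (sm_incl (A := B) (B := A `|` B)) ?fsubsetUr ?addrK //; first exact: span_sm.
move=> x; rewrite in_fsetU => /orP[xA _|-> //]; by rewrite /rst xA subrr.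
Qed.


Definition mat A : 'M[R]_(#|`A|, n) := \matrix_(i, j) (nth 0 A i) 0 j.
Definition fofr A (u : 'rV[R]_#|`A|) : V -> R :=
  fun x => \sum_(i < #|`A|) (if nth 0 A i == x then u 0 i else 0).

Lemma sum_nth (T : zmodType) A (F : V -> T) :
  \sum_(a <- A) F a = \sum_(i < #|`A|) F (nth 0 A i).
Proof. by rewrite (big_nth 0) big_mkord. Qed.

Lemma sm_mat A w : sm A w = (\row_i w (nth 0 A i)) *m mat A.
Proof.
rewrite /sm sum_nth mulmx_sum_row; apply: eq_bigr => i _.
rewrite mxE; congr (_ *: _); apply/rowP => j; by rewrite !mxE.
Qed.

Lemma fofr_nth A (r : 'rV[R]_#|`A|) (i : 'I_#|`A|) : fofr r (nth 0 A i) = r 0 i.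
Proof.
rewrite /fofr (bigD1 i) //= eqxx big1 ?addr0 // => j ji.
rewrite nth_uniq ?fset_uniq //; by case: eqP => // /val_inj E; move: ji; rewrite E eqxx.
Qed.

Lemma row_fofr A (r : 'rV[R]_#|`A|) : \row_i fofr r (nth 0 A i) = r.
Proof. by apply/rowP => i; rewrite mxE fofr_nth. Qed.

Lemma mem_nth_idx A a : a \in A -> exists i : 'I_#|`A|, a = nth 0 A i.
Proof.
move=> aA; have H : (index a A < #|`A|)%N by rewrite index_mem.
by exists (Ordinal H); rewrite /= nth_index.
Qed.

Lemma nth_mem_A A (i : 'I_#|`A|) : nth 0 A i \in A.
Proof. by rewrite mem_nth. Qed.

Lemma card_basis A : (forall w, sm A w = 0 -> forall a, a \in A -> w a = 0) ->
  (forall v, in_span A v) -> #|`A| = n.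
Proof.
move=> Hfree Hspan.
have Hk : kermx (mat A) = 0.
  apply/row_matrixP => i; rewrite row0.
  have E : row i (kermx (mat A)) *m mat A = 0 by rewrite -row_mul mulmx_ker row0.
  have E2 : sm A (fofr (row i (kermx (mat A)))) = 0 by rewrite sm_mat row_fofr.
  apply/rowP => j; have := Hfree _ E2 _ (nth_mem_A j); rewrite fofr_nth => ->; by rewrite mxE.
have r1 : \rank (mat A) = #|`A|.
  apply/eqP; rewrite -[_ == _]/(row_free _) -kermx_eq0 Hk //.
have r2 : (n <= \rank (mat A))%N.
  rewrite -{1}(mxrank1 R n); apply: mxrankS; apply/row_subP => j.
  have [w Ew] := Hspan (row j 1%:M); rewrite -/(sm _ _) sm_mat in Ew.
  by rewrite Ew submxMl.
have := rank_leq_col (mat A); rewrite r1 => H; apply/eqP; rewrite eqn_leq H -r1 r2 //.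
Qed.


Lemma fredholm A (b : V -> R) :
  (forall w, sm A w = 0 -> \sum_(a <- A) w a * b a = 0) ->
  exists c : V, forall a, a \in A -> dotv c a = b a.
Proof.
move=> Hb.
pose bc : 'cV[R]_#|`A| := \col_i b (nth 0 A i).
have Hsub : (bc^T <= (mat A)^T)%MS.
  rewrite submxE; apply/eqP/rowP => j; rewrite !mxE.
  set K := cokermx (mat A)^T.
  have E : (row j K^T) *m mat A = 0.
    by rewrite -row_mul -[mat A]trmxK -trmx_mul mulmx_coker trmx0 row0.
  have E2 : sm A (fofr (row j K^T)) = 0 by rewrite sm_mat row_fofr.
  rewrite -[RHS](Hb _ E2) sum_nth.
  apply: eq_bigr => i _; rewrite fofr_nth !mxE mulrC //.
have [D ED] := submxP Hsub.
exists D => a /mem_nth_idx [i ->].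
have := congr1 (fun M : 'M[R]_(1, #|`A|) => M 0 i) ED; rewrite !mxE => ->.
rewrite /dotv; apply: eq_bigr => j _; by rewrite !mxE.
Qed.

Lemma sm_delta A a : a \in A -> sm A (fun z => if z == a then 1 else 0) = a.
Proof.
move=> aA; rewrite (smD1 _ aA) eqxx scale1r.
rewrite (_ : sm _ _ = 0) ?addr0 // -(sm0f (A `\ a)); apply: sm_ext => x.
by rewrite in_fsetD1 => /andP[/negbTE ->].
Qed.

Lemma span_sum_gen2 A B w : (forall a, a \in A -> w a = 0 \/ in_span B a) -> in_span B (sm A w).
Proof.
move=> H; rewrite /sm big_seq; apply: (big_ind (in_span B)); first exact: span0.
  exact: spanD.
move=> a aA; case: (H a aA) => [->|Ha]; first by rewrite scale0r; apply: span0.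
by apply: spanZ.
Qed.

Lemma argmin_seq (s : seq V) (f : V -> R) : s != [::] ->
  exists2 z, z \in s & forall z', z' \in s -> f z <= f z'.
Proof.
elim: s => // a s IH _; case: (boolP (s == [::])) => [/eqP ->|].
  by exists a; rewrite ?inE // => z'; rewrite inE => /eqP ->.
case: s IH => // b s IH _; have [z zs Hz] := IH isT.
case: (leP (f a) (f z)) => Haz.
  exists a; first exact: mem_head.
  by move=> z'; rewrite inE => /orP[/eqP -> //|/Hz]; apply: le_trans.
exists z; first by rewrite inE zs orbT.
by move=> z'; rewrite inE => /orP[/eqP -> |/Hz //]; apply: ltW.
Qed.

Lemma argmin_fset A (f : V -> R) x0 : x0 \in A ->
  exists2 z, z \in A & forall z', z' \in A -> f z <= f z'.
Proof. by move=> xA; apply: argmin_seq; apply/negP => /eqP E; move: xA; rewrite -[x0 \in A]/(x0 \in enum_fset A) E. Qed.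

Lemma ex_max_nat (P : nat -> Prop) N : (exists k, P k) -> (forall k, P k -> (k <= N)%N) ->
  exists k, P k /\ forall j, P j -> (j <= k)%N.
Proof.
move=> [k0 Pk0] HN.
suff: forall d k, (N - k <= d)%N -> P k -> exists k, P k /\ forall j, P j -> (j <= k)%N.
  by move=> /(_ _ k0 (leqnn _) Pk0).
elim=> [|d IH] k Hd Pk.
  exists k; split => // j /HN Hj; apply: leq_trans Hj _; by rewrite -subn_eq0 -leqn0.
case: (pselect (exists j, P j /\ (k < j)%N)) => [[j [Pj kj]]|Hn].
  apply: (IH j) => //; have := HN _ Pj; lia.
exists k; split => // j Pj; rewrite leqNgt; apply/negP => kj; apply: Hn; by exists j.
Qed.

Variable X : {fset V}.
Hypothesis Hpos : forall v, in_pos X v.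
Hypothesis HH : forall Y, Y `<=` X -> #|`Y| = n.+1 -> good_position Y.

Lemma span_X v : in_span X v.
Proof. by have [w [_ ->]] := Hpos v; exists w. Qed.

Definition circ L C (mu : V -> R) : Prop :=
  C `<=` X /\ (forall x, x \in C -> ~ in_span L x) /\ (forall x, x \in C -> 0 < mu x) /\
  in_span L (sm C mu) /\
  (forall nu, in_span L (sm C nu) -> exists c, forall x, x \in C -> nu x = c * mu x).

Lemma complete_aux k : forall A P, (#|`P| <= k)%N -> exists B, B `<=` P /\
  (forall p, p \in P -> in_span (A `|` B) p) /\
  (forall be, in_span A (sm B be) -> forall b, b \in B -> be b = 0).
Proof.
elim: k => [|k IH] A P HP.
  have P0 : P = fset0 by apply: cardfs0_eq; lia.
  exists fset0; split; first exact: fsub0set.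
  by split => [p|be _ b]; rewrite ?P0 ?inE.
case: (fset_0Vmem P) => [->|[p pP]].
  exists fset0; split; first exact: fsub0set.
  by split => [p|be _ b]; rewrite ?inE.
have HP' : (#|`P `\ p| <= k)%N by move: HP; rewrite (cardfsD1 p) pP.
have [B' [sB' [spB' frB']]] := IH A _ HP'.
have pB' : p \notin B'.
  by apply/negP => /(fsubsetP sB'); rewrite in_fsetD1 eqxx.
case: (pselect (in_span (A `|` B') p)) => Hp.
  exists B'; split; first by apply: fsubset_trans sB' (fsubsetDl _ _).
  split => // q qP; case: (eqVneq q p) => [->//|qp]; apply: spB'; by rewrite in_fsetD1 qp.
exists (p |` B'); split.
  apply/fsubsetP => q; rewrite in_fset1U => /orP[/eqP->//|/(fsubsetP sB')].
  by rewrite in_fsetD1 => /andP[].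
split.
  move=> q qP; case: (eqVneq q p) => [->|qp].
    by apply: span_mem; rewrite !inE eqxx orbT.
  apply: (span_sub (A := A `|` B')); first by apply: fsetUS; apply: fsubsetU1.
  apply: spB'; by rewrite in_fsetD1 qp.
move=> be; rewrite /sm big_fsetU1 //= -/(sm B' be) => Hbe.
have bp : be p = 0.
  apply/eqP; apply/negP => /negP bp; apply: Hp.
  have -> : p = (be p)^-1 *: ((be p *: p + sm B' be) - sm B' be).
    by rewrite addrK scalerA mulVf // scale1r.
  apply: spanZ; apply: spanB.
    exact: (span_sub (fsubsetUl _ _) Hbe).
  apply: span_sum_gen => b bB; apply: span_mem; by rewrite in_fsetU bB orbT.
move: Hbe; rewrite bp scale0r add0r => Hbe b; rewrite in_fset1U => /orP[/eqP->//|bB].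
exact: frB'.
Qed.

Lemma complete A P : exists B, B `<=` P /\
  (forall p, p \in P -> in_span (A `|` B) p) /\
  (forall be, in_span A (sm B be) -> forall b, b \in B -> be b = 0).
Proof. exact: (@complete_aux #|`P|). Qed.


Lemma reduce L k : forall S w, (#|`S| <= k)%N -> S `<=` X ->
  (forall z, z \in S -> ~ in_span L z) -> (forall z, z \in S -> 0 < w z) ->
  S != fset0 -> in_span L (sm S w) -> exists C mu, C != fset0 /\ circ L C mu.
Proof.
elim: k => [|k IH] S w HS SX SnL Sw S0 Hsp.
  by move: S0; rewrite -cardfs_eq0; lia.
case: (pselect (forall nu, in_span L (sm S nu) -> exists c, forall x, x \in S -> nu x = c * w x)) => Hmin.
  by exists S, w; do !split.
have [nu [Hnu [[z zS zpos] Hnc]]] : exists nu, in_span L (sm S nu) /\ (exists2 z, z \in S & 0 < nu z) /\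
    ~ (exists c, forall x, x \in S -> nu x = c * w x).
  move/existsNP: Hmin => [nu /not_implyP [Hnu Hnc]].
  case: (pselect (exists2 z, z \in S & 0 < nu z)) => Hz; first by exists nu.
  exists (fun x => - nu x); split; first by rewrite smN; apply: spanN.
  split.
    apply: contrapT => Hz2; apply: Hnc; exists 0 => x xS; rewrite mul0r.
    apply/eqP; rewrite eq_le; apply/andP; split.
      by rewrite leNgt; apply/negP => H; apply: Hz; exists x.
    by rewrite leNgt; apply/negP => H; apply: Hz2; exists x; rewrite // oppr_gt0.
  move=> [c Hc]; apply: Hnc; exists (- c) => x xS; rewrite mulNr -Hc // opprK //.
pose P := [fset x in S | 0 < nu x].
have zP : z \in P by rewrite !inE /= zS zpos.
have [z0 z0P Hz0] := argmin_fset (fun x => w x / nu x) zP.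
move: z0P; rewrite !inE /= => /andP[z0S z0pos].
set s := w z0 / nu z0.
have spos : 0 < s by rewrite /s divr_gt0 // Sw.
pose w2 := fun x => w x - s * nu x.
have w2ge : forall x, x \in S -> 0 <= w2 x.
  move=> x xS; rewrite /w2 subr_ge0; case: (ltP 0 (nu x)) => nux.
    have := Hz0 x; rewrite !inE /= xS nux => /(_ isT); rewrite -/s => H.
    by rewrite -ler_pdivlMr.
  apply: le_trans (ltW (Sw _ xS)); by rewrite mulr_ge0_le0 // ltW.
pose S2 := [fset x in S | 0 < w2 x].
have S2S : S2 `<=` S by apply/fsubsetP => x; rewrite !inE /= => /andP[].
have z0S2 : z0 \notin S2.
  by rewrite !inE /= z0S /= /w2 /s divfK ?subrr ?ltxx // gt_eqF.
apply: (IH S2 w2).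
- have : S2 `<=` S `\ z0.
    apply/fsubsetP => x xS2; rewrite in_fsetD1 (fsubsetP S2S) // andbT.
    by apply/eqP => E; move: z0S2; rewrite -E xS2.
  move/fsubset_leq_card; move: HS; rewrite (cardfsD1 z0) z0S; lia.
- exact: fsubset_trans S2S SX.
- by move=> x /(fsubsetP S2S); apply: SnL.
- by move=> x; rewrite !inE /= => /andP[].
- apply/negP => /eqP S20; apply: Hnc; exists (s^-1) => x xS.
  have : w2 x = 0.
    apply/eqP; rewrite eq_le w2ge // andbT leNgt; apply/negP => H.
    have : x \in S2 by rewrite !inE /= xS H.
    by rewrite S20 inE.
  rewrite /w2 => /eqP; rewrite subr_eq0 => /eqP ->.
  by rewrite mulrA mulVf ?mul1r // gt_eqF.
- have -> : sm S2 w2 = sm S w2.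
    apply: sm_incl => // x xS xS2; apply/eqP; rewrite eq_le w2ge // andbT leNgt.
    by apply/negP => H; move: xS2; rewrite !inE /= xS H.
  rewrite /w2 smB smZ; apply: spanB => //; exact: spanZ.
Qed.

Lemma exist_circ L : (exists v, ~ in_span L v) -> exists C mu, C != fset0 /\ circ L C mu.
Proof.
move=> [v Hv].
have [x xX xnL] : exists2 x, x \in X & ~ in_span L x.
  apply: contrapT => H; apply: Hv; apply: (span_trans (A := X)); last exact: span_X.
  by move=> a aX; apply: contrapT => Ha; apply: H; exists a.
have [w [wge Ew]] := Hpos (- x).
pose w' := fun z => w z + (if z == x then 1 else 0).
have w'ge : forall z, z \in X -> 0 <= w' z.
  by move=> z zX; rewrite /w' addr_ge0 ?wge //; case: eqP.
have Hs : sm X w' = 0 by rewrite /w' smD sm_delta // /sm -Ew addNr.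
pose S := [fset z in X | (0 < w' z) && `[< ~ in_span L z >]].
have xS : x \in S.
  rewrite !inE /= xX /=; apply/andP; split; last by apply/asboolP.
  by rewrite /w' eqxx ltr_pwDr ?wge.
apply: (@reduce L #|`S| S w').
- by [].
- by apply/fsubsetP => z; rewrite !inE /= => /andP[].
- by move=> z; rewrite !inE /= => /andP[_ /andP[_ /asboolP]].
- by move=> z; rewrite !inE /= => /andP[_ /andP[]].
- by apply/negP => /eqP S0; move: xS; rewrite S0 inE.
- have -> : sm S w' = sm X w' - sm X (fun z => w' z - rst S w' z).
    rewrite smB sm_rst; first by rewrite opprB addrC subrK.
    by apply/fsubsetP => z; rewrite !inE /= => /andP[].
  rewrite Hs sub0r; apply: spanN; apply: span_sum_gen2 => a aX.
  rewrite /rst; case: ifP => aS; first by left; rewrite subrr.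
  move: aS; rewrite !inE /= aX /=; case: (ltP 0 (w' a)) => /= wa.
    by move/negbT/asboolPn/contrapT; right.
  by left; rewrite subr0; apply/eqP; rewrite eq_le wa w'ge.
Qed.

Lemma max_circ L : (exists C mu, C != fset0 /\ circ L C mu) ->
  exists Y la, Y != fset0 /\ circ L Y la /\ forall C mu, circ L C mu -> (#|`C| <= #|`Y|)%N.
Proof.
move=> [C0 [mu0 [C00 H0]]].
have [k [[Y [la [Y0 [HY Hk]]]] Hmax]] := @ex_max_nat
  (fun k => exists Y la, Y != fset0 /\ circ L Y la /\ #|`Y| = k) #|`X|
  (ex_intro _ #|`C0| (ex_intro _ C0 (ex_intro _ mu0 (conj C00 (conj H0 erefl)))))
  (fun k '(ex_intro Y (ex_intro la (conj _ (conj HY Hk)))) =>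
     eq_ind _ (fun k => (k <= #|`X|)%N) (fsubset_leq_card HY.1) _ Hk).
exists Y, la; split => //; split => // C mu HC.
case: (eqVneq C fset0) => [->|C0']; first by rewrite cardfs0.
rewrite Hk; apply: Hmax; by exists C, mu.
Qed.


Lemma dotv0 (c : V) : dotv c 0 = 0.
Proof. by rewrite /dotv big1 // => i _; rewrite mxE mulr0. Qed.

Lemma sm_sub_pt A a w : a \in A -> sm A (fun x => if x == a then 0 else w x) = sm (A `\ a) w.
Proof.
move=> aA; rewrite (smD1 _ aA) eqxx scale0r add0r; apply: sm_ext => x.
by rewrite in_fsetD1 => /andP[/negbTE ->].
Qed.

Lemma other_pt (y1 y2 w : V) : y1 != y2 -> exists2 y, (y == y1) || (y == y2) & y != w.
Proof.
move=> y12; case: (eqVneq y1 w) => [E|]; last by exists y1; rewrite ?eqxx.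
by exists y2; rewrite ?eqxx ?orbT // -E eq_sym.
Qed.

Lemma conical_of W sig x1 x2 y1 y2 : x1 \in W -> x2 \in W -> y1 \in W -> y2 \in W ->
  x1 != x2 -> y1 != y2 -> 0 < sig x1 -> 0 < sig x2 -> sig y1 < 0 -> sig y2 < 0 ->
  (forall nu, sm W nu = 0 -> exists c, forall x, x \in W -> nu x = c * sig x) ->
  conical_position W.
Proof.
move=> x1W x2W y1W y2W x12 y12 s1 s2 s3 s4 Hprop; split.
  pose pos := fun x => if 0 < sig x then sig x else 0.
  pose neg := fun x => if sig x < 0 then - sig x else 0.
  pose sP := \sum_(x <- W) pos x.
  pose sN := \sum_(x <- W) neg x.
  have posge : forall x, 0 <= pos x by move=> x; rewrite /pos; case: ifP => // /ltW.
  have negge : forall x, 0 <= neg x.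
    by move=> x; rewrite /neg; case: ifP => // H; rewrite oppr_ge0 ltW.
  have sPpos : 0 < sP.
    rewrite /sP (big_fsetD1 x1) //=.
    have h1 : 0 < pos x1 by rewrite /pos s1.
    have h2 : 0 <= \sum_(i <- W `\ x1) pos i by apply: sumr_ge0.
    lra.
  have sNpos : 0 < sN.
    rewrite /sN (big_fsetD1 y1) //=.
    have h1 : 0 < neg y1 by rewrite /neg s3 oppr_gt0.
    have h2 : 0 <= \sum_(i <- W `\ y1) neg i by apply: sumr_ge0.
    lra.
  pose b := fun x => if 0 < sig x then sN else if sig x < 0 then sP else 1.
  pose m := Num.min (Num.min sN sP) 1.
  have mpos : 0 < m by rewrite /m !lt_min sNpos sPpos ltr01.
  have bge : forall x, m <= b x.
    move=> x; rewrite /b /m; case: ifP => _; first by rewrite !ge_min lexx.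
    by case: ifP => _; rewrite !ge_min lexx ?orbT.
  have Hsb : \sum_(x <- W) sig x * b x = 0.
    have -> : \sum_(x <- W) sig x * b x = \sum_(x <- W) (sN * pos x - sP * neg x).
      apply: eq_bigr => x _; rewrite /b /pos /neg.
      case: (ltgtP 0 (sig x)) => H.
      - by rewrite mulr0 subr0 mulrC.
      - by rewrite mulr0 sub0r mulrN opprK mulrC.
      - by rewrite -H !mulr0 mul0r subrr.
    by rewrite sumrB -!mulr_sumr -/sP -/sN mulrC subrr.
  have Hb : forall nu, sm W nu = 0 -> \sum_(a <- W) nu a * b a = 0.
    move=> nu Hnu; have [c Hc] := Hprop nu Hnu.
    rewrite big_seq (eq_bigr (fun x => c * (sig x * b x))) -?big_seq.
      by rewrite -mulr_sumr Hsb mulr0.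
    by move=> x xW; rewrite Hc // mulrA.
  have [c0 Hc0] := fredholm Hb.
  exists c0, (m / 2); split.
    by rewrite dotv0 divr_gt0.
  move=> a aW; rewrite Hc0 //; apply: lt_le_trans (bge a).
  by rewrite ltr_pdivrMr // ltr_pMr // ltr1n.
move=> w wW [rho [rhoge Ew]].
pose nu := fun x => if x == w then -1 else rho x.
have Hnu : sm W nu = 0.
  rewrite (smD1 _ wW) /nu eqxx scaleN1r (sm_ext (w' := rho)).
    by rewrite /sm -Ew addNr.
  by move=> x; rewrite in_fsetD1 => /andP[/negbTE ->].
have [c Hc] := Hprop nu Hnu.
have cw := Hc w wW; rewrite /nu eqxx in cw.
case: (ltgtP c 0) => Hc0.
- have [x xx xw] := other_pt w x12.
  have xW : x \in W by case/orP: xx => /eqP ->.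
  have sx : 0 < sig x by case/orP: xx => /eqP ->.
  have := Hc x xW; rewrite /nu (negbTE xw) => E.
  have : 0 <= rho x by apply: rhoge; rewrite in_fsetD1 xw xW.
  rewrite E => H; have : c * sig x < 0 by rewrite nmulr_rlt0.
  by rewrite ltNge H.
- have [x xx xw] := other_pt w y12.
  have xW : x \in W by case/orP: xx => /eqP ->.
  have sx : sig x < 0 by case/orP: xx => /eqP ->.
  have := Hc x xW; rewrite /nu (negbTE xw) => E.
  have : 0 <= rho x by apply: rhoge; rewrite in_fsetD1 xw xW.
  rewrite E => H; have : c * sig x < 0 by rewrite pmulr_rlt0.
  by rewrite ltNge H.
- by move: cw; rewrite Hc0 mul0r => /eqP; rewrite oppr_eq0 oner_eq0.
Qed.

Lemma card_of W sig x1 : x1 \in W -> sig x1 != 0 -> sm W sig = 0 ->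
  (forall nu, sm W nu = 0 -> exists c, forall x, x \in W -> nu x = c * sig x) ->
  (forall v, in_span W v) -> #|`W| = n.+1.
Proof.
move=> x1W s1 Hs Hprop Hsp.
have H : #|`W `\ x1| = n.
  apply: card_basis.
    move=> g Hg a; rewrite in_fsetD1 => /andP[ax aW].
    pose g' := fun x => if x == x1 then 0 else g x.
    have Hg' : sm W g' = 0 by rewrite sm_sub_pt.
    have [c Hc] := Hprop g' Hg'.
    have := Hc x1 x1W; rewrite /g' eqxx => /esym /eqP; rewrite mulf_eq0 (negbTE s1) orbF => /eqP c0.
    by have := Hc a aW; rewrite /g' (negbTE ax) c0 mul0r.
  move=> v; apply: (span_trans (A := W)) => // a aW.
  case: (eqVneq a x1) => [->|ax]; last by apply: span_mem; rewrite in_fsetD1 ax aW.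
  move: Hs; rewrite (smD1 _ x1W) => /eqP; rewrite addr_eq0 => /eqP E.
  have E2 : x1 = (sig x1)^-1 *: (sig x1 *: x1) by rewrite scalerA mulVf ?scale1r.
  by rewrite [X in in_span _ X]E2 E; apply: spanZ; apply: spanN; apply: span_sm.
by rewrite (cardfsD1 x1) x1W H.
Qed.


Lemma two_elems A : (2 <= #|`A|)%N -> exists x1 x2, [/\ x1 \in A, x2 \in A & x1 != x2].
Proof.
move=> HA; case: (fset_0Vmem A) => [A0|[x1 x1A]]; first by move: HA; rewrite A0 cardfs0.
case: (fset_0Vmem (A `\ x1)) => [A0|[x2]].
  by move: HA; rewrite (cardfsD1 x1) x1A A0 cardfs0.
rewrite in_fsetD1 => /andP[x21 x2A]; exists x1, x2; split => //; by rewrite eq_sym.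
Qed.

Lemma KL L Y la C mu : L `<=` X -> circ L Y la ->
  (forall C2 mu2, circ L C2 mu2 -> (#|`C2| <= #|`Y|)%N) ->
  circ (L `|` Y) C mu -> in_span L (sm C mu).
Proof.
move=> LX [YX [YnL [lapos [Ylsp Ymin]]]] Ymax [CX [CnLY [mupos [Cspan Cmin]]]].
apply: contrapT => Hn.
have [al Hal] := spanU_dec Cspan.
have CnY : forall x, x \in C -> x \notin Y.
  move=> x xC; apply/negP => xY; apply: (CnLY x xC); apply: span_mem; by rewrite in_fsetU xY orbT.
have CnL : forall x, x \in C -> ~ in_span L x.
  by move=> x xC H; apply: (CnLY x xC); apply: span_sub H; apply: fsubsetUl.
have [y0 y0Y] : exists y0, y0 \in Y.
  case: (fset_0Vmem Y) => [Y0|[y0 ?]]; last by exists y0.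
  by exfalso; apply: Hn; move: Hal; rewrite Y0 sm_set0 subr0.
have [ys ysY Hys] := argmin_fset (fun y => - (al y / la y)) y0Y.
set ts := al ys / la ys.
have rle : forall y, y \in Y -> al y <= ts * la y.
  move=> y yY; have := Hys y yY; rewrite lerN2 -/ts => H.
  by have := ler_wpM2r (ltW (lapos y yY)) H; rewrite divfK // gt_eqF ?lapos.
pose tau := fun y => ts * la y - al y.
have tauge : forall y, y \in Y -> 0 <= tau y by move=> y yY; rewrite /tau subr_ge0 rle.
have tauys : tau ys = 0 by rewrite /tau /ts divfK ?subrr // gt_eqF ?lapos.
pose T := [fset y in Y | 0 < tau y].
have TY : T `<=` Y by apply/fsubsetP => y; rewrite !inE /= => /andP[].
have tau0 : forall y, y \in Y -> y \notin T -> tau y = 0.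
  move=> y yY yT; apply/eqP; rewrite eq_le tauge // andbT leNgt; apply/negP => H.
  by move: yT; rewrite !inE /= yY H.
have smYtau : sm Y tau = ts *: sm Y la - sm Y al by rewrite /tau smB smZ.
have [t tT] : exists t, t \in T.
  case: (fset_0Vmem T) => [T0|[t ?]]; last by exists t.
  exfalso; apply: Hn.
  have : sm Y tau = 0.
    by rewrite -(sm0f Y); apply: sm_ext => y yY; apply: tau0 => //; rewrite T0 inE.
  rewrite smYtau => /eqP; rewrite subr_eq0 => /eqP E.
  have -> : sm C mu = (sm C mu - sm Y al) + ts *: sm Y la by rewrite E subrK.
  by apply: spanD => //; apply: spanZ.
have tY : t \in Y := fsubsetP TY t tT.
have taut : 0 < tau t by move: tT; rewrite !inE /= => /andP[].
have dCT : [disjoint C & T].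
  apply/fdisjointP => x xC; apply/negP => /(fsubsetP TY); apply/negP; exact: CnY.
have CT : forall x, x \in C -> x \in T -> False.
  by move=> x xC xT; move/fdisjointP: dCT => /(_ x xC); rewrite xT.
pose mu2 := fun x => if x \in C then mu x else tau x.
have smC2 : forall nu, sm (C `|` T) nu = sm C nu + sm T nu by move=> nu; apply: smU.
have smTY : forall g, sm T g = sm Y (rst T g) by move=> g; rewrite sm_rst.
have sp2 : in_span L (sm (C `|` T) mu2).
  rewrite smC2 (sm_ext (w := mu2) (w' := mu)); last by move=> x xC; rewrite /mu2 xC.
  rewrite (sm_ext (A := T) (w := mu2) (w' := tau)); last first.
    move=> x xT; rewrite /mu2; case: ifP => // xC; by case: (CT x xC xT).
  rewrite (sm_incl TY tau0).
  rewrite smYtau.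
  have -> : sm C mu + (ts *: sm Y la - sm Y al) = (sm C mu - sm Y al) + ts *: sm Y la.
    by rewrite addrA addrAC.
  by apply: spanD => //; apply: spanZ.
have HC2 : circ L (C `|` T) mu2.
  split; first by rewrite fsubUset CX (fsubset_trans TY YX).
  split.
    move=> x; rewrite in_fsetU => /orP[xC|xT]; first exact: CnL.
    exact: YnL (fsubsetP TY x xT).
  split.
    move=> x; rewrite in_fsetU /mu2 => /orP[xC|xT]; first by rewrite xC mupos.
    case: ifP => xC; first by case: (CT x xC xT).
    by move: xT; rewrite !inE /= => /andP[].
  split => // nu Hnu.
  have HT : in_span (L `|` Y) (sm T nu).
    apply: span_sum_gen => a aT; apply: span_mem; by rewrite in_fsetU (fsubsetP TY a aT) orbT.
  have HC : in_span (L `|` Y) (sm C nu).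
    have -> : sm C nu = sm (C `|` T) nu - sm T nu by rewrite smC2 addrK.
    apply: spanB => //; exact: span_sub (fsubsetUl _ _) Hnu.
  have [c Hc] := Cmin nu HC.
  pose g := fun x => nu x - c * mu2 x.
  have Hg : in_span L (sm Y (rst T g)).
    rewrite -smTY.
    have -> : sm T g = sm (C `|` T) g.
      rewrite smC2 (_ : sm C g = 0) ?add0r // -(sm0f C); apply: sm_ext => x xC.
      by rewrite /g /mu2 xC Hc // subrr.
    by rewrite /g smB smZ; apply: spanB => //; apply: spanZ.
  have [c' Hc'] := Ymin _ Hg.
  have c'0 : c' = 0.
    have := Hc' ys ysY; rewrite /rst.
    have -> : (ys \in T) = false by rewrite !inE /= ysY tauys ltxx.
    move=> /esym /eqP; rewrite mulf_eq0 (gt_eqF (lapos _ ysY)) orbF => /eqP //.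
  exists c => x; rewrite in_fsetU => /orP[xC|xT].
    by rewrite /mu2 xC Hc.
  have := Hc' x (fsubsetP TY x xT); rewrite /rst xT c'0 mul0r /g => /eqP.
  by rewrite subr_eq0 => /eqP.
have Hcard : (#|`C| + #|`T| <= #|`Y|)%N.
  have := Ymax _ _ HC2; rewrite cardfsU (disjoint_fsetI0 dCT) cardfs0 subn0 //.
have [x1 x1C] : exists x1, x1 \in C.
  case: (fset_0Vmem C) => [C0|[x1 ?]]; last by exists x1.
  by exfalso; apply: Hn; rewrite C0 sm_set0; apply: span0.
have [x2 x2C] : exists x2, x2 \in C `\ x1.
  case: (fset_0Vmem (C `\ x1)) => [C0|[x2 ?]]; last by exists x2.
  exfalso; apply: (CnLY x1 x1C).
  move: Cspan; rewrite (smD1 _ x1C) C0 sm_set0 addr0 => H.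
  have -> : x1 = (mu x1)^-1 *: (mu x1 *: x1) by rewrite scalerA mulVf ?scale1r // gt_eqF ?mupos.
  exact: spanZ.
move: x2C; rewrite in_fsetD1 => /andP[x21 x2C].
have C2 : (2 <= #|`C|)%N.
  rewrite (cardfsD1 x1) x1C (cardfsD1 x2) in_fsetD1 x21 x2C; by [].
have [y1 [y2 [y1Y y2Y y12]]] : exists y1 y2, [/\ y1 \in Y `\` T, y2 \in Y `\` T & y1 != y2].
  apply: two_elems; rewrite cardfsDS //; clear -Hcard C2; lia.
move: y1Y y2Y; rewrite !in_fsetD => /andP[y1T y1Y] /andP[y2T y2Y].
have aly : forall y, y \in Y -> y \notin T -> al y = ts * la y.
  by move=> y yY yT; have := tau0 y yY yT; rewrite /tau => /eqP; rewrite subr_eq0 => /eqP.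
set kap := al t / la t.
have kaplt : kap < ts.
  move: taut; rewrite /tau subr_gt0 => H.
  by rewrite /kap ltr_pdivrMr ?lapos.
pose h := fun y => kap * la y - al y.
have ht : h t = 0 by rewrite /h /kap divfK ?subrr // gt_eqF ?lapos.
pose ell1 := sm C mu + sm Y h.
have ell1sp : in_span L ell1.
  rewrite /ell1 /h smB smZ.
  have -> : sm C mu + (kap *: sm Y la - sm Y al) = (sm C mu - sm Y al) + kap *: sm Y la.
    by rewrite addrA addrAC.
  by apply: spanD => //; apply: spanZ.
have [BL [BLL [BLsp BLfr]]] := complete fset0 L.
rewrite fset0U in BLsp.
have [be Hbe] : in_span BL ell1 by apply: span_trans ell1sp.
rewrite -/(sm BL be) in Hbe.
have BLfree : forall g, sm BL g = 0 -> forall b, b \in BL -> g b = 0.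
  by move=> g Hg; apply: BLfr; rewrite Hg; apply: span0.
have BLinL : forall b, b \in BL -> in_span L b.
  by move=> b /(fsubsetP BLL) bL; apply: span_mem.
pose Yt := Y `\ t.
pose A0 := C `|` Yt `|` BL.
have [B' [B'X [B'sp B'fr]]] := complete A0 X.
pose W := A0 `|` B'.
have CYt : forall x, x \in C -> x \in Yt -> False.
  by move=> x xC; rewrite in_fsetD1 => /andP[_ xY]; move: (CnY x xC); rewrite xY.
have dCYt : [disjoint C & Yt] by apply/fdisjointP => x xC; apply/negP => /(CYt x xC).
have BLnC : forall x, x \in BL -> x \notin C.
  by move=> x xB; apply/negP => xC; apply: (CnL x xC); apply: BLinL.
have BLnY : forall x, x \in BL -> x \notin Y.
  by move=> x xB; apply/negP => xY; apply: (YnL x xY); apply: BLinL.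
have BLnYt : forall x, x \in BL -> x \notin Yt.
  by move=> x xB; rewrite in_fsetD1 (negbTE (BLnY x xB)) andbF.
have dCYtBL : [disjoint C `|` Yt & BL].
  apply/fdisjointP => x; rewrite in_fsetU => /orP[xC|xYt]; apply/negP => xB.
    by move: (BLnC x xB); rewrite xC.
  by move: (BLnYt x xB); rewrite xYt.
have B'nA0 : forall x, x \in B' -> x \notin A0.
  move=> x xB; apply/negP => xA.
  have := B'fr (fun z => if z == x then 1 else 0).
  rewrite sm_delta // => /(_ (span_mem xA) x xB); rewrite eqxx => /eqP; by rewrite oner_eq0.
have dA0B' : [disjoint A0 & B'].
  by apply/fdisjointP => x xA; apply/negP => xB; move: (B'nA0 x xB); rewrite xA.
have smA0 : forall g, sm A0 g = sm C g + sm Yt g + sm BL g.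
  by move=> g; rewrite smU // smU.
have smW : forall g, sm W g = sm A0 g + sm B' g by move=> g; apply: smU.
pose sig := fun x => if x \in C then mu x else if x \in Yt then h x else if x \in BL then - be x else 0.
have smYt : forall g, g t = 0 -> sm Yt g = sm Y g.
  by move=> g gt; rewrite (smD1 _ tY) gt scale0r add0r.
have sigC : forall x, x \in C -> sig x = mu x by move=> x xC; rewrite /sig xC.
have sigYt : forall x, x \in Yt -> sig x = h x.
  by move=> x xYt; rewrite /sig; case: ifP => xC; [case: (CYt x xC xYt)|rewrite xYt].
have sigBL : forall x, x \in BL -> sig x = - be x.
  by move=> x xB; rewrite /sig (negbTE (BLnC x xB)) (negbTE (BLnYt x xB)) xB.
have sigB' : forall x, x \in B' -> sig x = 0.
  move=> x xB; have := B'nA0 x xB; rewrite /A0 !in_fsetU negb_or => /andP[].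
  rewrite negb_or => /andP[/negbTE xC /negbTE xYt] /negbTE xBL.
  by rewrite /sig xC xYt xBL.
have Hsig : sm W sig = 0.
  rewrite smW smA0 (sm_ext sigC) (sm_ext sigYt) (sm_ext sigBL) (sm_ext sigB') sm0f addr0.
  by rewrite smYt // smN -Hbe /ell1 addrN.
have Hprop : forall nu, sm W nu = 0 -> exists c, forall x, x \in W -> nu x = c * sig x.
  move=> nu Hnu.
  have nuB' : forall x, x \in B' -> nu x = 0.
    apply: B'fr; have -> : sm B' nu = - sm A0 nu.
      by apply/eqP; rewrite -addr_eq0 addrC -smW Hnu.
    by apply: spanN; apply: span_sm.
  have HA0 : sm A0 nu = 0.
    by rewrite -[RHS]Hnu smW (_ : sm B' nu = 0) ?addr0 // -(sm0f B'); apply: sm_ext.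
  have HYt : in_span (L `|` Y) (sm Yt nu).
    apply: span_sum_gen => a; rewrite in_fsetD1 => /andP[_ aY].
    by apply: span_mem; rewrite in_fsetU aY orbT.
  have HBL : in_span L (sm BL nu) by apply: span_sum_gen.
  have HC : in_span (L `|` Y) (sm C nu).
    have -> : sm C nu = - (sm Yt nu + sm BL nu).
      by apply/eqP; rewrite -addr_eq0 addrA -smA0 HA0.
    apply: spanN; apply: spanD => //; exact: span_sub (fsubsetUl _ _) HBL.
  have [c Hc] := Cmin nu HC.
  have smCnu : sm C nu = c *: sm C mu by rewrite -smZ; apply: sm_ext.
  have HY : in_span L (sm Y (fun y => rst Yt nu y + c * al y)).
    rewrite smD sm_rst; last by apply: fsubsetDl.
    have -> : sm Yt nu = - (c *: sm C mu) - sm BL nu.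
      by apply/eqP; rewrite -smCnu -opprD -addr_eq0 addrCA addrA -smA0 HA0.
    rewrite smZ.
    have -> : - (c *: sm C mu) - sm BL nu + c *: sm Y al = - (c *: (sm C mu - sm Y al)) - sm BL nu.
      by rewrite scalerBr opprD opprK addrAC.
    by apply: spanB => //; apply: spanN; apply: spanZ.
  have [c' Hc'] := Ymin _ HY.
  have c'E : c' = c * kap.
    have := Hc' t tY; rewrite /rst in_fsetD1 eqxx /= add0r => E.
    by rewrite /kap mulrA E mulfK // gt_eqF ?lapos.
  have nuYt : forall x, x \in Yt -> nu x = c * h x.
    move=> x xYt; have := Hc' x (fsubsetP (fsubsetDl Y [fset t]) x xYt).
    rewrite /rst xYt c'E /h => E.
    by rewrite mulrBr mulrA -E addrK.
  have nuBL : forall x, x \in BL -> nu x = - c * be x.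
    have : sm BL (fun x => nu x + c * be x) = 0.
      rewrite smD smZ -Hbe /ell1.
      have -> : sm BL nu = - (sm C nu + sm Yt nu) by apply/eqP; rewrite -addr_eq0 addrC -smA0 HA0.
      by rewrite smCnu (sm_ext nuYt) smZ smYt // scalerDr addNr.
    move=> H x xB; have := BLfree _ H x xB => /eqP; by rewrite addr_eq0 mulNr => /eqP.
  exists c => x; rewrite /W /A0 !in_fsetU => /orP[/orP[/orP[xC|xYt]|xB]|xB].
  - by rewrite Hc // sigC.
  - by rewrite nuYt // sigYt.
  - by rewrite nuBL // sigBL // mulNr mulrN.
  - by rewrite nuB' // sigB' // mulr0.
have Hspan : forall v, in_span W v by move=> v; apply: span_trans (span_X v).
have WX : W `<=` X.
  rewrite /W /A0 !fsubUset CX B'X (fsubset_trans BLL LX) /=.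
  by rewrite (fsubset_trans (fsubsetDl _ _) YX).
have Wx1 : x1 \in W by rewrite /W /A0 !in_fsetU x1C.
have Wx2 : x2 \in W by rewrite /W /A0 !in_fsetU x2C.
have y1Yt : y1 \in Yt by rewrite in_fsetD1 y1Y andbT; apply/eqP => E; move: y1T; rewrite E tT.
have y2Yt : y2 \in Yt by rewrite in_fsetD1 y2Y andbT; apply/eqP => E; move: y2T; rewrite E tT.
have Wy1 : y1 \in W by rewrite /W /A0 !in_fsetU y1Yt orbT.
have Wy2 : y2 \in W by rewrite /W /A0 !in_fsetU y2Yt orbT.
have sy : forall y, y \in Yt -> y \notin T -> sig y < 0.
  move=> y yYt yT; have yY : y \in Y by move: yYt; rewrite in_fsetD1 => /andP[].
  rewrite sigYt // /h aly // -mulrBl pmulr_llt0 ?lapos // subr_lt0 //.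
have s1 : sig x1 != 0 by rewrite sigC // gt_eqF ?mupos.
have HcardW := card_of Wx1 s1 Hsig Hprop Hspan.
have := HH WX HcardW; apply.
apply: (conical_of Wx1 Wx2 Wy1 Wy2 _ y12 _ _ (sy _ y1Yt y1T) (sy _ y2Yt y2T) Hprop).
- by rewrite eq_sym.
- by rewrite sigC ?mupos.
- by rewrite sigC ?mupos.
Qed.


Fixpoint Lof (Ys : seq {fset V}) : {fset V} := if Ys is Y :: Ys' then Lof Ys' `|` Y else fset0.
Definition stage_ok L Y := Y != fset0 /\ exists la, circ L Y la /\ sm Y la = 0 /\
  forall C mu, circ L C mu -> (#|`C| <= #|`Y|)%N.
Fixpoint goodseq (Ys : seq {fset V}) : Prop :=
  if Ys is Y :: Ys' then goodseq Ys' /\ stage_ok (Lof Ys') Y else True.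

Lemma goodseq_sub Ys : goodseq Ys -> Lof Ys `<=` X.
Proof.
elim: Ys => [|Y Ys IH] /=; first by rewrite fsub0set.
by move=> [/IH H [_ [la [[YX _] _]]]]; rewrite fsubUset H YX.
Qed.

Lemma genuine Ys : goodseq Ys -> forall C mu, circ (Lof Ys) C mu -> sm C mu = 0.
Proof.
elim: Ys => [|Y Ys IH] /=.
  by move=> _ C mu [_ [_ [_ [H _]]]]; apply: span_set0.
move=> [gYs [_ [la [HY [_ Hmax]]]]] C mu HC.
have Hs := KL (goodseq_sub gYs) HY Hmax HC.
apply: (IH gYs C mu).
case: HC => [CX [CnL [mupos [_ Cmin]]]].
split => //; split.
  by move=> x xC H; apply: (CnL x xC); apply: span_sub H; apply: fsubsetUl.
split => //; split => // nu Hnu; apply: Cmin; apply: span_sub Hnu; apply: fsubsetUl.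
Qed.

Lemma step Ys : goodseq Ys -> ~ (forall v, in_span (Lof Ys) v) ->
  exists Y, goodseq (Y :: Ys) /\ (#|`Lof Ys| < #|`Lof (Y :: Ys)|)%N.
Proof.
move=> gYs Hn.
have [C [mu [C0 HC]]] : exists C mu, C != fset0 /\ circ (Lof Ys) C mu.
  by apply: exist_circ; apply/existsNP.
have [Y [la [Y0 [HY Hmax]]]] := max_circ (ex_intro _ C (ex_intro _ mu (conj C0 HC))).
have Hg := genuine gYs HY.
exists Y; split; first by split => //; split => //; exists la.
have dLY : [disjoint Lof Ys & Y].
  apply/fdisjointP => x xL; apply/negP => xY.
  by case: HY => [_ [YnL _]]; apply: (YnL x xY); apply: span_mem.
rewrite /= cardfsU (disjoint_fsetI0 dLY) cardfs0 subn0.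
case: (fset_0Vmem Y) => [E|[y yY]]; first by move: Y0; rewrite E eqxx.
have H := cardfsD1 y Y; rewrite yY /= in H; by rewrite H addnA addn1 leq_addr.
Qed.

Lemma build k : forall Ys, goodseq Ys -> (#|`X| - #|`Lof Ys| <= k)%N ->
  exists Ys', goodseq Ys' /\ forall v, in_span (Lof Ys') v.
Proof.
elim: k => [|k IH] Ys gYs Hk; case: (pselect (forall v, in_span (Lof Ys) v)) => Hsp;
  try by exists Ys.
- have [Y [gY Hlt]] := step gYs Hsp.
  have := fsubset_leq_card (goodseq_sub gY); move: Hk Hlt; clear; lia.
- have [Y [gY Hlt]] := step gYs Hsp.
  apply: (IH (Y :: Ys)) => //; move: Hk Hlt; clear; lia.
Qed.

Lemma sq_bound (y : V) e j : 0 < e -> dotv y y < e ^+ 2 -> `|y 0 j| < e.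
Proof.
move=> e0 H.
have H1 : y 0 j * y 0 j <= dotv y y.
  rewrite /dotv (bigD1 j) //= lerDl; apply: sumr_ge0 => i _; by rewrite -expr2 sqr_ge0.
have H2 : `|y 0 j| * `|y 0 j| = y 0 j * y 0 j by rewrite -normrM ger0_norm // -expr2 sqr_ge0.
have H3 : 0 <= `|y 0 j| by apply: normr_ge0.
move: H; rewrite expr2 => H; nra.
Qed.

Lemma relint Y la : Y != fset0 -> (forall y, y \in Y -> 0 < la y) -> sm Y la = 0 ->
  in_relint_conv Y 0.
Proof.
move=> Y0 lapos Hla.
have [y0 y0Y] : exists y0, y0 \in Y.
  by case: (fset_0Vmem Y) => [E|[y ?]]; [move: Y0; rewrite E eqxx|exists y].
pose Lam := \sum_(y <- Y) la y.
have Lampos : 0 < Lam.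
  rewrite /Lam (big_fsetD1 y0) //=.
  have h1 := lapos y0 y0Y.
  have h2 : 0 <= \sum_(i <- Y `\ y0) la i.
    by rewrite big_seq; apply: sumr_ge0 => i; rewrite in_fsetD1 => /andP[_ /lapos /ltW].
  lra.
pose lh := fun y => la y / Lam.
have lhpos : forall y, y \in Y -> 0 < lh y by move=> y yY; rewrite divr_gt0 ?lapos.
have lhsum : \sum_(y <- Y) lh y = 1 by rewrite /lh -mulr_suml mulfV // gt_eqF.
have lhsm : sm Y lh = 0 by rewrite /lh (sm_ext (w' := fun y => Lam^-1 * la y)) ?smZ ?Hla ?scaler0 // => y _; rewrite mulrC.
split; first by exists lh; split => // y yY; apply: ltW; apply: lhpos.
have [z0 z0Y Hz0] := argmin_fset lh y0Y.
set rho := lh z0.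
have rhopos : 0 < rho by apply: lhpos.
have rhole1 : rho <= 1.
  rewrite -lhsum (big_fsetD1 z0) //= lerDl big_seq; apply: sumr_ge0 => i.
  by rewrite in_fsetD1 => /andP[_ /lhpos /ltW].
set m := #|`Y|.
pose G := pinvmx (mat Y).
pose K := \sum_(i < n) \sum_(j < m) `|G i j|.
have K0 : 0 <= K by apply: sumr_ge0 => i _; apply: sumr_ge0 => j _; apply: normr_ge0.
pose del := rho / (2 * (m%:R + 1)).
have delpos : 0 < del by rewrite divr_gt0 // mulr_gt0 // ltr_wpDl.
pose eps := del / (K + 1).
have epspos : 0 < eps by rewrite divr_gt0 // ltr_wpDl.
exists eps => // y [w [wsum Ey]] Hnear.
have Hy : (y <= mat Y)%MS by rewrite Ey -/(sm Y w) sm_mat submxMl.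
pose c := y *m G.
have Eyc : y = c *m mat Y by rewrite mulmxKpV.
pose cf := fofr c.
have smcf : sm Y cf = y by rewrite sm_mat row_fofr.
have ybound : forall j, `|y 0 j| < eps.
  move=> j; apply: sq_bound => //; move: Hnear; rewrite /near_by subr0 //.
have cbound : forall i, `|c 0 i| <= del.
  move=> i; rewrite /c mxE.
  apply: le_trans (ler_norm_sum _ _ _) _.
  apply: (@le_trans _ _ (\sum_(j < n) eps * `|G j i|)).
    apply: ler_sum => j _; rewrite normrM; apply: ler_wpM2r; [exact: normr_ge0|exact: ltW].
  rewrite -mulr_sumr.
  have HK : \sum_(j < n) `|G j i| <= K.
    rewrite /K; apply: ler_sum => j _.
    rewrite (bigD1 i) //= lerDl; apply: sumr_ge0 => k _; apply: normr_ge0.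
  apply: (@le_trans _ _ (eps * K)); first by apply: ler_wpM2l => //; apply: ltW.
  have Ee : eps * (K + 1) = del by rewrite /eps divfK // gt_eqF // ltr_wpDl.
  by rewrite -Ee mulrDr mulr1 lerDl ltW.
have cfbound : forall a, a \in Y -> `|cf a| <= del.
  by move=> a /mem_nth_idx [i ->]; rewrite /cf fofr_nth.
pose S := \sum_(a <- Y) cf a.
have Sbound : `|S| <= m%:R * del.
  apply: le_trans (ler_norm_sum _ _ _) _.
  have -> : m%:R * del = \sum_(a <- Y) del by rewrite big_const_seq count_predT iter_addr_0 mulr_natl.
  by rewrite big_seq [X in _ <= X]big_seq; apply: ler_sum => a aY; apply: cfbound.
have h7 : del * (2 * (m%:R + 1)) = rho by rewrite /del divfK // mulf_neq0 // gt_eqF // ltr_wpDl.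
have hm : 0 <= m%:R :> R by [].
have mdel : m%:R * del <= 1 / 2 by nra.
exists (fun a => lh a * (1 - S) + cf a); split.
  move=> a aY; have h1 := lhpos a aY; have h2 := Hz0 a aY; rewrite -/rho in h2.
  have h3 := cfbound a aY; have h4 := Sbound.
  have h5 : - del <= cf a by move: h3; rewrite ler_norml => /andP[].
  have h6 : S <= m%:R * del by move: h4; rewrite ler_norml => /andP[].
  nra.
split.
  rewrite big_split /= -mulr_suml lhsum mul1r -/S; lra.
rewrite -/(sm Y _) smD (sm_ext (w' := fun a => (1 - S) * lh a)); last by move=> a _; rewrite mulrC.
by rewrite smZ lhsm scaler0 add0r smcf.
Qed.

Lemma nth_sub_Lof Ys i : (i < size Ys)%N -> nth fset0 Ys i `<=` Lof Ys.
Proof.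
elim: Ys i => [|Y Ys IH] [|i] //= Hi; first exact: fsubsetUr.
apply: fsubset_trans (IH i Hi) _; exact: fsubsetUl.
Qed.

Lemma nth_stage Ys i : goodseq Ys -> (i < size Ys)%N ->
  let Y := nth fset0 Ys i in
  Y `<=` X /\ Y != fset0 /\ exists la, (forall y, y \in Y -> 0 < la y) /\ sm Y la = 0 /\
    (forall nu, sm Y nu = 0 -> exists c, forall y, y \in Y -> nu y = c * la y).
Proof.
elim: Ys i => [|Y Ys IH] [|i] //= [gYs [Y0 [la [[YX [_ [lapos [_ Ymin]]]] [Hla _]]]]] Hi.
  split => //; split => //; exists la; split => //; split => // nu Hnu.
  by apply: Ymin; rewrite Hnu; apply: span0.
exact: IH.
Qed.

Lemma disjoint_nth Ys : goodseq Ys -> forall i j, (i < j)%N -> (j < size Ys)%N ->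
  [disjoint nth fset0 Ys i & nth fset0 Ys j].
Proof.
elim: Ys => [|Y Ys IH] //= [gYs [_ [la [[_ [YnL _]] _]]]] [|i] [|j] //= ij Hj.
  apply/fdisjointP => x xY; apply/negP => xj; apply: (YnL x xY); apply: span_mem.
  exact: (fsubsetP (nth_sub_Lof Hj)).
exact: IH.
Qed.

Lemma span_Lof_nth Ys i v : (i < size Ys)%N -> in_span (nth fset0 Ys i) v -> in_span (Lof Ys) v.
Proof. by move=> Hi; apply: span_sub; apply: nth_sub_Lof. Qed.

Lemma indep_list Ys : goodseq Ys -> forall vs : nat -> V,
  (forall i, (i < size Ys)%N -> in_span (nth fset0 Ys i) (vs i)) ->
  \sum_(i < size Ys) vs i = 0 -> forall i, (i < size Ys)%N -> vs i = 0.
Proof.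
elim: Ys => [|Y Ys IH] //= [gYs [_ [la [[_ [_ [_ [_ Ymin]]]] [Hla _]]]]] vs Hvs Hsum.
rewrite big_ord_recl /= in Hsum.
have Hrest : in_span (Lof Ys) (\sum_(i < size Ys) vs (bump 0 i)).
  rewrite big_seq; apply: (big_ind (in_span (Lof Ys))); [exact: span0|exact: spanD|].
  move=> i _; apply: (span_Lof_nth (ltn_ord i)); exact: (Hvs i.+1 (ltn_ord i)).
have [be Ebe] := Hvs 0 isT; rewrite /= -/(sm Y be) in Ebe.
have H0 : in_span (Lof Ys) (sm Y be).
  rewrite -Ebe (_ : vs 0 = - \sum_(i < size Ys) vs (bump 0 i)); first exact: spanN.
  by apply/eqP; rewrite -addr_eq0 Hsum.
have [c Hc] := Ymin be H0.
have v0 : vs 0 = 0 by rewrite Ebe (sm_ext Hc) smZ Hla scaler0.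
move: Hsum; rewrite v0 add0r => Hsum.
case=> [|i] Hi //; apply: (IH gYs (fun j => vs j.+1)) => //.
by move=> j Hj; apply: Hvs.
Qed.

Lemma span_list Ys x : in_span (Lof Ys) x -> exists vs : nat -> V,
  (forall i, (i < size Ys)%N -> in_span (nth fset0 Ys i) (vs i)) /\ x = \sum_(i < size Ys) vs i.
Proof.
elim: Ys x => [|Y Ys IH] x /=.
  by move/span_set0 => ->; exists (fun _ => 0); split => //; rewrite big_ord0.
move=> /spanU_dec [al Hal]; have [vs [Hvs Evs]] := IH _ Hal.
exists (fun i => if i is j.+1 then vs j else sm Y al); split.
  by case=> [|i] Hi //=; [apply: span_sm|apply: Hvs].
by rewrite big_ord_recl /= -Evs addrC subrK.
Qed.

End Main.

Unset Implicit Arguments.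
Local Open Scope ring_scope.
Local Open Scope fset_scope.

Lemma dotvZ (R : realType) n (a : R) (v : 'rV[R]_n) : dotv (a *: v) (a *: v) = a ^+ 2 * dotv v v.
Proof. rewrite /dotv big_distrr /=; apply: eq_bigr => i _; rewrite !mxE; by rewrite expr2 mulrACA. Qed.

Lemma dotv_ge0 (R : realType) n (v : 'rV[R]_n) : 0 <= dotv v v.
Proof. by apply: sumr_ge0 => i _; rewrite -expr2 sqr_ge0. Qed.

Theorem theorem1p3 (R : realType) (n : nat) (X : {fset 'rV[R]_n}) :
  (0 : 'rV[R]_n) \notin X ->
  in_interior_conv X 0 ->
  (forall x y, x \in X -> y \in X -> x != y ->
     forall c : R, 0 < c -> y != c *: x) ->
  (forall Y : {fset 'rV[R]_n}, Y `<=` X -> #|` Y| = n.+1 -> good_position Y) ->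
  exists (k : nat) (Xs : 'I_k -> {fset 'rV[R]_n}),
    (1 <= k)%N /\
    (forall i, Xs i `<=` X) /\
    (forall i j, i != j -> [disjoint Xs i & Xs j]) /\
    (forall i, simplex_vertices (Xs i) /\ in_relint_conv (Xs i) 0) /\
    (forall v : 'I_k -> 'rV[R]_n, (forall i, in_span (Xs i) (v i)) ->
       \sum_(i < k) v i = 0 -> forall i, v i = 0) /\
    (forall x : 'rV[R]_n, exists v : 'I_k -> 'rV[R]_n,
       (forall i, in_span (Xs i) (v i)) /\ x = \sum_(i < k) v i).
Proof.
move=> HX0 [eps eps0 Hint] _ HH.
have Hconv0 : in_conv X 0.
  by apply: Hint; rewrite /near_by subr0 dotv0 exprn_gt0.
have Hpos : forall v, in_pos X v.
  move=> v; set d := dotv v v.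
  have d0 : 0 <= d by apply: dotv_ge0.
  set del := eps / (1 + d).
  have del0 : 0 < del by rewrite divr_gt0 // ltr_wpDr.
  have Ed : del * (1 + d) = eps by rewrite /del divfK // gt_eqF // ltr_wpDr.
  have : near_by eps (del *: v) 0.
    rewrite /near_by subr0 dotvZ -/d -Ed; nra.
  move/Hint => [w [wge [_ Ew]]].
  exists (fun x => w x / del); split.
    by move=> a aX; rewrite divr_ge0 ?wge // ltW.
  have -> : v = del^-1 *: (del *: v) by rewrite scalerA mulVf ?scale1r // gt_eqF.
  rewrite Ew scaler_sumr; apply: eq_bigr => x _; by rewrite scalerA mulrC.
have [x0 x0X] : exists x, x \in X.
  case: Hconv0 => w [_ [Hw _]]; case: (fset_0Vmem X) => [E|[x ?]]; last by exists x.
  by move: Hw; rewrite E big_seq_fset0 => /eqP; rewrite eq_sym oner_eq0.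
have [Ys [gYs HYs]] := @build R n X Hpos HH #|`X| [::] I (leq_subr _ _).
set k := size Ys.
have k1 : (1 <= k)%N.
  case: Ys gYs HYs @k => // _ /(_ x0) /= /span_set0 E.
  by move: HX0; rewrite -E x0X.
exists k, (fun i => nth fset0 Ys i); split => //; split.
  by move=> i; have [] := nth_stage gYs (ltn_ord i).
split.
  move=> i j ij; case: (ltngtP i j) => H.
  - exact: disjoint_nth gYs _ _ H (ltn_ord j).
  - by rewrite fdisjoint_sym; apply: disjoint_nth gYs _ _ H (ltn_ord i).
  - by move: ij; rewrite (val_inj H) eqxx.
split.
  move=> i; have [_ [Y0 [la [lapos [Hla Ymin]]]]] := nth_stage gYs (ltn_ord i).
  split; last exact: relint Y0 lapos Hla.
  split => // w Hw1 Hw2 a aY.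
  have [c Hc] := Ymin w Hw2.
  have Hl : \sum_(y <- nth fset0 Ys i) la y != 0.
    have [y0 y0Y] : exists y0, y0 \in nth fset0 Ys i.
      by case: (fset_0Vmem (nth fset0 Ys i)) => [E|[y ?]]; [move: Y0; rewrite E eqxx|exists y].
    rewrite (big_fsetD1 y0) //= gt_eqF // ltr_pwDl ?lapos //.
    by rewrite big_seq; apply: sumr_ge0 => y; rewrite in_fsetD1 => /andP[_ /lapos /ltW].
  have : c * \sum_(y <- nth fset0 Ys i) la y = 0.
    rewrite -[RHS]Hw1 mulr_sumr big_seq [RHS]big_seq; apply: eq_bigr => y yY; by rewrite Hc.
  move/eqP; rewrite mulf_eq0 (negbTE Hl) orbF => /eqP c0.
  by rewrite Hc // c0 mul0r.
split.
  move=> v Hv Hsum i.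
  pose vs := fun j : nat => if insub j is Some i' then v i' else 0 : 'rV[R]_n.
  have Evs : forall i' : 'I_k, vs i' = v i' by move=> i'; rewrite /vs valK.
  have := @indep_list R n X Ys gYs vs.
  rewrite -/k (eq_bigr (fun i => v i)); last by move=> i' _; rewrite Evs.
  move=> /(_ _ Hsum i (ltn_ord i)); rewrite Evs; apply.
  by move=> j Hj; rewrite (_ : j = Ordinal Hj) // Evs; apply: Hv.
move=> x; have [vs [Hvs Ex]] := span_list (HYs x).
exists (fun i => vs i); split => //; move=> i; exact: Hvs (ltn_ord i).
Qed.
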